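(* Let $d\ge2$, $1\le m<d$, $\delta\in(0,1)$, let $f=(f_1,\dots,f_L):\mathbb{R}^d\to\mathbb{R}^L$ be a classifier, $\boldsymbol{x}_0\in\mathbb{R}^d$ with label $\hat k$ and $\|\boldsymbol{r}^*\|_2<\infty$, let $\mathcal S$ be a random $m$-dimensional subspace, and let $0\le l\le u$, $t\ge0$. Let $p\in\arg\min_{i\neq\hat k}\|\boldsymbol{r}^i\|_2$ and define the (deterministic) set $$A=\Big\{k\neq\hat k:\ \|\boldsymbol{r}^k\|_2\ge1.45\sqrt{\zeta_2(m,\delta)}\sqrt{\tfrac dm}\,\|\boldsymbol{r}^*\|_2\Big\}.$$ Assume that for every $k\ne\hat k$ with $k\notin A$, $\mathbb{P}\big(l\le\|\boldsymbol{r}^k_{\mathcal S}\|_2/\|\boldsymbol{r}^k\|_2\le u\big)\ge1-\delta$, and that $\mathbb{P}\big(\|\boldsymbol{r}^p_{\mathcal S}\|_2\ge1.45\sqrt{\zeta_2(m,\delta)}\sqrt{\tfrac dm}\,\|\boldsymbol{r}^*\|_2\big)\le t$. Then $$\mathbb{P}\Big(l\le\frac{\|\boldsymbol{r}^*_{\mathcal S}\|_2}{\|\boldsymbol{r}^*\|_2}\le u\Big)\ge1-(L+1)\delta-t.$$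
   Context: For an $L$-class classifier $f=(f_1,\dots,f_L):\mathbb{R}^d\to\mathbb{R}^L$ and a point $\boldsymbol{x}_0$ with estimated label $\hat k=\arg\max_k f_k(\boldsymbol{x}_0)$, and for a linear subspace $\mathcal{S}\subseteq\mathbb{R}^d$ and $k\neq\hat k$, define $\|\boldsymbol{r}^k_{\mathcal S}\|_2=\inf\{\|\boldsymbol{r}\|_2:\boldsymbol{r}\in\mathcal{S},\ f_k(\boldsymbol{x}_0+\boldsymbol{r})\ge f_{\hat k}(\boldsymbol{x}_0+\boldsymbol{r})\}$ (with $\inf\emptyset=+\infty$), $\|\boldsymbol{r}^k\|_2:=\|\boldsymbol{r}^k_{\mathbb{R}^d}\|_2$, $\|\boldsymbol{r}^*_{\mathcal S}\|_2=\min_{k\neq\hat k}\|\boldsymbol{r}^k_{\mathcal S}\|_2$ and $\|\boldsymbol{r}^*\|_2=\min_{k\neq\hat k}\|\boldsymbol{r}^k\|_2$. A random $m$-dimensional subspace of $\mathbb{R}^d$ is the span of $m$ independent vectors drawn uniformly from the unit sphere $\mathbb{S}^{d-1}$. For $m\ge1$ and $\delta\in(0,1)$, $\zeta_2(m,\delta)=\Big(\max\big(\tfrac1e\delta^{2/m},\,1-\sqrt{2(1-\delta^{2/m})}\big)\Big)^{-1}$. *)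

(* Defs.v *)
From HB Require Import structures.
From mathcomp Require Import all_boot all_order all_algebra.
From mathcomp Require Import all_classical all_reals all_analysis measurable_realfun.
Set Implicit Arguments. Unset Strict Implicit. Unset Printing Implicit Defensive.
Import Order.TTheory GRing.Theory Num.Theory numFieldNormedType.Exports.
Local Open Scope classical_set_scope.
Local Open Scope ring_scope.

Definition norm2 {R : realType} {d : nat} (x : 'rV[R]_d) : R :=
  Num.sqrt (\sum_(i < d) x 0 i ^+ 2).

(* || r^k_S ||_2 = inf { ||r||_2 : r in S, f_k(x0+r) >= f_khat(x0+r) }, in \bar R
   (inf of the empty set is +oo). *)
Definition rnorm_sub {R : realType} {d L : nat} (f : 'rV[R]_d -> 'I_L -> R)
  (x0 : 'rV[R]_d) (khat k : 'I_L) (S : set 'rV[R]_d) : \bar R :=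
  ereal_inf [set (norm2 r)%:E | r in [set r | S r /\ f (x0 + r) khat <= f (x0 + r) k]].

Definition rnorm {R : realType} {d L : nat} (f : 'rV[R]_d -> 'I_L -> R)
  (x0 : 'rV[R]_d) (khat k : 'I_L) : \bar R := rnorm_sub f x0 khat k setT.

Definition rstar_sub {R : realType} {d L : nat} (f : 'rV[R]_d -> 'I_L -> R)
  (x0 : 'rV[R]_d) (khat : 'I_L) (S : set 'rV[R]_d) : \bar R :=
  ereal_inf [set rnorm_sub f x0 khat k S | k in [set k | k != khat]].

Definition rstar {R : realType} {d L : nat} (f : 'rV[R]_d -> 'I_L -> R)
  (x0 : 'rV[R]_d) (khat : 'I_L) : \bar R := rstar_sub f x0 khat setT.

Definition zeta2 {R : realType} (m : nat) (delta : R) : R :=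
  (Num.max (expR (-1) * delta `^ (2 / m%:R))
           (1 - Num.sqrt (2 * (1 - delta `^ (2 / m%:R)))))^-1.

Definition borelV {R : realType} {d : nat} (B : set 'rV[R]_d) : Prop :=
  <<s [set U : set 'rV[R]_d | open U] >> B.

Definition unit_sphere {R : realType} {d : nat} : set 'rV[R]_d :=
  [set x | norm2 x = 1].

Definition span_of {R : realType} {d m : nat} (v : 'I_m -> 'rV[R]_d) : set 'rV[R]_d :=
  [set r | (r <= \matrix_(i < m) v i)%MS].

(* v_0, ..., v_{m-1} : T -> R^d are independent random vectors, each uniformly
   distributed on the unit sphere S^{d-1} (the uniform distribution being the
   unique rotation-invariant probability measure carried by the sphere). *)
Definition iid_uniform_sphere {R : realType} {dT : measure_display}
  {T : measurableType dT} (P : probability T R) {d m : nat}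
  (v : 'I_m -> T -> 'rV[R]_d) : Prop :=
  [/\ (forall i B, borelV B -> measurable (v i @^-1` B)),
      (forall B : 'I_m -> set 'rV[R]_d, (forall i, borelV (B i)) ->
         P (\bigcap_(i in [set: 'I_m]) (v i @^-1` B i)) =
         (\prod_(i < m) P (v i @^-1` B i))%E),
      (forall i, P (v i @^-1` unit_sphere) = 1%E) &
      (forall i (Q : 'M[R]_d) B, Q *m Q^T = 1%:M -> borelV B ->
         P ((fun w => v i w *m Q) @^-1` B) = P (v i @^-1` B))].

(* Main.v *)
Require Import Defs.
From HB Require Import structures.
From mathcomp Require Import all_boot all_order all_algebra.
From mathcomp Require Import all_classical all_reals all_analysis measurable_realfun.
From mathcomp Require Import ring lra.
Import Order.TTheory GRing.Theory Num.Theory numFieldNormedType.Exports.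
Local Open Scope classical_set_scope.
Local Open Scope ring_scope.

Section Helpers.
Context {R : realType} {d L : nat} (f : 'rV[R]_d -> 'I_L -> R) (x0 : 'rV[R]_d) (khat : 'I_L).

Lemma rnorm_sub_ge0 k (S : set 'rV[R]_d) : (0 <= rnorm_sub f x0 khat k S)%E.
Proof.
apply/ereal_infP => _ [r _ <-]; rewrite lee_fin; exact: sqrtr_ge0.
Qed.

Lemma rnorm_le_sub k (S : set 'rV[R]_d) : (rnorm f x0 khat k <= rnorm_sub f x0 khat k S)%E.
Proof.
apply: le_ereal_inf => _ [r [_ Hr] <-]; exists r => //.
Qed.

Lemma rstar_sub_ge0 (S : set 'rV[R]_d) : (0 <= rstar_sub f x0 khat S)%E.
Proof. apply/ereal_infP => _ [k _ <-]; exact: rnorm_sub_ge0. Qed.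

Lemma rstar_sub_le k (S : set 'rV[R]_d) : k != khat ->
  (rstar_sub f x0 khat S <= rnorm_sub f x0 khat k S)%E.
Proof. by move=> hk; apply: ereal_inf_lbound; exists k. Qed.

Lemma rstar_sub_big (S : set 'rV[R]_d) :
  rstar_sub f x0 khat S = \big[Order.min/+oo%E]_(k | k != khat) rnorm_sub f x0 khat k S.
Proof.
apply/eqP; rewrite eq_le; apply/andP; split.
  apply: le_bigmin; first by rewrite leey.
  by move=> k hk; exact: rstar_sub_le.
apply/ereal_infP => _ [k hk <-]; exact: bigmin_le_cond.
Qed.

End Helpers.

Section Meas.
Context {R : realType} {dT : measure_display} {T : measurableType dT}.

Lemma meas_bigmin {I : eqType} (s : seq I) (Pr : pred I) (X : I -> T -> \bar R) :
  (forall k, Pr k -> measurable_fun [set: T] (X k)) ->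
  measurable_fun [set: T] (fun w => \big[Order.min/+oo%E]_(k <- s | Pr k) X k w).
Proof.
move=> mX; elim: s => [|k s IH].
  under eq_fun do rewrite big_nil; exact: measurable_cst.
under eq_fun do rewrite big_cons.
case hk: (Pr k) => //.
exact: measurable_mine (mX k hk) IH.
Qed.

Lemma meas_ratio (g : T -> \bar R) (c : \bar R) (a b : R) :
  measurable_fun [set: T] g ->
  measurable [set w | (a%:E <= g w * c <= b%:E)%E].
Proof.
move=> mg.
have mg' : measurable_fun [set: T] (fun w => c * g w)%E by exact: measurable_funeM.
suff -> : [set w | (a%:E <= g w * c <= b%:E)%E] =
    (fun w => c * g w)%E @^-1` [set` `[a%:E, b%:E]%R].
  rewrite -[X in measurable X]setTI; exact: mg' measurableT _ (emeasurable_itv _).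
by apply/seteqP; split => w /=; rewrite in_itv /= muleC.
Qed.

Lemma union_bound (P : probability T R) {I : Type} (s : seq I) (B : I -> set T) :
  (forall k, measurable (B k)) ->
  (P (\big[setU/set0]_(k <- s) B k) <= \sum_(k <- s) P (B k))%E.
Proof.
move=> mB; elim: s => [|k s IH]; first by rewrite !big_nil measure0.
rewrite !big_cons; apply: le_trans (measureU2 _ _ _) _ => //.
  by apply: bigsetU_measurable.
exact: leeD.
Qed.

End Meas.

Lemma in_bigsetU {T : Type} {I : eqType} (s : seq I) (B : I -> set T) k :
  k \in s -> B k `<=` \big[setU/set0]_(i <- s) B i.
Proof.
elim: s => [//|j s IH]; rewrite inE big_cons => /orP[/eqP->|ks] w Bw.
  by left.
by right; apply: IH.
Qed.

Theorem lemma5 (R : realType) (dT : measure_display) (T : measurableType dT)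
  (P : probability T R) (d m L : nat) (delta l u t : R)
  (f : 'rV[R]_d -> 'I_L -> R) (x0 : 'rV[R]_d) (khat p : 'I_L)
  (v : 'I_m -> T -> 'rV[R]_d) :
  (2 <= d)%N -> (1 <= m)%N -> (m < d)%N -> 0 < delta < 1 ->
  (forall k, f x0 k <= f x0 khat) ->
  (rstar f x0 khat < +oo)%E ->
  iid_uniform_sphere P v ->
  (forall k, k != khat ->
     measurable_fun [set: T] ((fun w => rnorm_sub f x0 khat k (span_of (fun i => v i w))) : T -> \bar R)) ->
  0 <= l -> l <= u -> 0 <= t ->
  p != khat -> rnorm f x0 khat p = rstar f x0 khat ->
  let thr := ((145 / 100 * Num.sqrt (zeta2 m delta) * Num.sqrt (d%:R / m%:R))%:E
              * rstar f x0 khat)%E in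
  let A := [set k | k != khat /\ (thr <= rnorm f x0 khat k)%E] in
  (forall k, k != khat -> ~ A k ->
     (P [set w | l%:E <= rnorm_sub f x0 khat k (span_of (fun i => v i w))
                          / rnorm f x0 khat k <= u%:E]
      >= (1 - delta)%:E)%E) ->
  (P [set w | thr <= rnorm_sub f x0 khat p (span_of (fun i => v i w))] <= t%:E)%E ->
  (P [set w | l%:E <= rstar_sub f x0 khat (span_of (fun i => v i w))
                        / rstar f x0 khat <= u%:E]
   >= (1 - (L%:R + 1) * delta - t)%:E)%E.
Proof.
move=> d2 m1 md /andP[d0 d1] _ rsfin _ mX l0 lu t0 pk rpE thr A hK hp.
have rs0 : (0 <= rstar f x0 khat)%E by exact: rstar_sub_ge0.
have [r rsE] : exists r, rstar f x0 khat = r%:E.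
  by exists (fine (rstar f x0 khat)); rewrite fineK // ge0_fin_numE.
have r0 : 0 <= r by rewrite -lee_fin -rsE.
have mY : measurable_fun [set: T]
    (fun w => rstar_sub f x0 khat (span_of (fun i => v i w))).
  under eq_fun do rewrite rstar_sub_big.
  by apply: meas_bigmin => k hk; exact: mX.
have mE := @meas_ratio _ _ _ _ ((rstar f x0 khat)^-1)%E l u mY.
have Ld : 0 <= (L%:R + 1) * delta by rewrite mulr_ge0 // ?ltW // addr_ge0.
case: (ltrP 0 r) => [rpos|rle0].
  pose c := 145 / 100 * Num.sqrt (zeta2 m delta) * Num.sqrt (d%:R / m%:R).
  have c1 : 1 < c.
    have pw1 : delta `^ (2 / m%:R) <= 1.
      have := @ger_powR R delta _ 0 (2 / m%:R); rewrite powRr0; apply.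
        by rewrite d0 ltW.
      by rewrite divr_ge0.
    set a := expR (-1) * delta `^ (2 / m%:R).
    set b := 1 - Num.sqrt (2 * (1 - delta `^ (2 / m%:R))).
    have a0 : 0 < a by rewrite mulr_gt0 ?expR_gt0 ?powR_gt0.
    have a1 : a <= 1.
      apply: mulr_ile1 => //; rewrite ?expR_ge0 ?powR_ge0 ?expR_le1 ?oppr_le0 //.
    have b1 : b <= 1 by rewrite /b; have := sqrtr_ge0 (2 * (1 - delta `^ (2 / m%:R))); lra.
    have z1 : 1 <= zeta2 m delta.
      rewrite /zeta2 -/a -/b invf_ge1.
        by rewrite ge_max a1 b1.
      by rewrite lt_max a0.
    have s1 : 1 <= Num.sqrt (zeta2 m delta) by have := @ler_sqrt R 1 _ (le_trans ler01 z1); rewrite sqrtr1 z1.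
    have dm1 : 1 <= d%:R / m%:R :> R.
      rewrite ler_pdivlMr ?ltr0n // mul1r ler_nat; exact: ltnW.
    have s2 : 1 <= Num.sqrt (d%:R / m%:R) :> R by have := @ler_sqrt R 1 _ (le_trans ler01 dm1); rewrite sqrtr1 dm1.
    have := mulr_ege1 s1 s2; rewrite /c -mulrA; lra.
  have thrE : thr = (c * r)%:E by rewrite /thr rsE.
  have nAp : ~ A p.
    move=> [_]; rewrite thrE rpE rsE lee_fin => H.
    have : r < c * r by rewrite ltr_pMl.
    lra.
  have good : forall k w, k != khat -> ~ A k ->
     (l%:E <= rnorm_sub f x0 khat k (span_of (fun i => v i w)) / rnorm f x0 khat k <= u%:E)%E ->
     exists rho x, [/\ rnorm f x0 khat k = rho%:E,
        rnorm_sub f x0 khat k (span_of (fun i => v i w)) = x%:E, r <= rho,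
        l * rho <= x & x <= u * rho].
    move=> k w hk nAk /andP[Hl Hu].
    have rk1 : (rstar f x0 khat <= rnorm f x0 khat k)%E by exact: rstar_sub_le.
    have rk2 : (rnorm f x0 khat k < thr)%E.
      by rewrite ltNge; apply/negP => H; apply: nAk.
    have [rho rhoE] : exists rho, rnorm f x0 khat k = rho%:E.
      exists (fine (rnorm f x0 khat k)); rewrite fineK // ge0_fin_numE.
        by rewrite thrE in rk2; exact: lt_trans rk2 (ltry _).
      exact: rnorm_sub_ge0.
    have rrho : r <= rho by rewrite -lee_fin -rhoE -rsE.
    have rho0 : 0 < rho by exact: lt_le_trans rpos rrho.
    rewrite rhoE inver gt_eqF // in Hl Hu.
    have X0 := rnorm_sub_ge0 f x0 khat k (span_of (fun i => v i w)).
    move: Hl Hu X0.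
    case: (rnorm_sub f x0 khat k (span_of (fun i => v i w))) => [x| |] Hl Hu X0 //.
      rewrite -EFinM !lee_fin in Hl Hu.
      rewrite ler_pdivlMr // in Hl; rewrite ler_pdivrMr // in Hu.
      by exists rho, x; split.
    by rewrite mulyr gtr0_sg ?invr_gt0 // mul1e leye_eq in Hu.
  pose Ek k := [set w | (l%:E <= rnorm_sub f x0 khat k (span_of (fun i => v i w))
                          / rnorm f x0 khat k <= u%:E)%E].
  pose B k := [set w | k != khat /\ ~ A k /\ ~ Ek k w].
  pose Bp := [set w | (thr <= rnorm_sub f x0 khat p (span_of (fun i => v i w)))%E].
  pose U := \big[setU/set0]_(k <- index_enum 'I_L) B k `|` Bp.
  have hB : forall k, measurable (B k) /\ (P (B k) <= delta%:E)%E.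
    move=> k; have [hk|hk] := eqVneq k khat.
      rewrite (_ : B k = set0); first by rewrite measure0 lee_fin ltW.
      by apply/seteqP; split => w //= -[/eqP hne _]; exact: hne hk.
    have [Ak|nAk] := pselect (A k).
      rewrite (_ : B k = set0); first by rewrite measure0 lee_fin ltW.
      by apply/seteqP; split => w //= -[_ [nA _]]; exact: nA Ak.
    have mEk : measurable (Ek k) by exact: meas_ratio (mX k hk).
    rewrite (_ : B k = ~` Ek k); last first.
      by apply/seteqP; split => w /=; [case=> _ [] | move=> H; split].
    split; first exact: measurableC.
    rewrite probability_setC //.
    have := hK k hk nAk; rewrite -/(Ek k).
    have PE0 := measure_ge0 P (Ek k).
    have PE1 := probability_le1 P mEk.
    move: PE0 PE1; case: (P (Ek k)) => [q| |] //= q0 q1 hq.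
    rewrite -EFinB lee_fin; rewrite !lee_fin in q0 q1 hq; lra.
  have mBp : measurable Bp.
    rewrite (_ : Bp = (fun w => rnorm_sub f x0 khat p (span_of (fun i => v i w))) @^-1`
                      [set` `[thr, +oo[%R]).
      rewrite -[X in measurable X]setTI; exact: (mX p pk) measurableT _ (emeasurable_itv _).
    by apply/seteqP; split => w /=; rewrite in_itv /= andbT.
  have mU : measurable U.
    apply: measurableU => //; apply: bigsetU_measurable => k _; exact: (hB k).1.
  have PU : (P U <= (delta *+ L + t)%:E)%E.
    apply: le_trans (measureU2 _ _ _) _ => //.
      by apply: bigsetU_measurable => k _; exact: (hB k).1.
    rewrite EFinD; apply: leeD => //.
    apply: le_trans (union_bound P (index_enum 'I_L) B (fun k => (hB k).1)) _.
    apply: le_trans (lee_sum (g := fun _ => delta%:E) _ _) _.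
      by move=> k _; exact: (hB k).2.
    by rewrite sumEFin sumr_const card_ord.
  have sub : ~` U `<=` [set w | (l%:E <= rstar_sub f x0 khat (span_of (fun i => v i w))
                        / rstar f x0 khat <= u%:E)%E].
    move=> w /= nU.
    have nBp : ~ Bp w by move=> H; apply: nU; right.
    have hE : forall k, k != khat -> ~ A k -> Ek k w.
      move=> k hk nAk; apply/not_notP => nE; apply: nU; left.
      exact: (@in_bigsetU T 'I_L (index_enum 'I_L) B k (mem_index_enum k) w (conj hk (conj nAk nE))).
    have [rp [xp [rpE' xpE rle lx xu]]] := good p w pk nAp (hE p pk nAp).
    have rpr : rp = r by apply/EFin_inj; rewrite -rpE' rpE rsE.
    rewrite rpr in lx xu.
    have xpthr : (xp%:E < thr)%E by rewrite -xpE ltNge; apply/negP.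
    have Y0 := rstar_sub_ge0 f x0 khat (span_of (fun i => v i w)).
    have Yp := rstar_sub_le f x0 khat p (span_of (fun i => v i w)) pk.
    have Ylb : ((l * r)%:E <= rstar_sub f x0 khat (span_of (fun i => v i w)))%E.
      apply/ereal_infP => _ [k hk <-].
      have [Ak|nAk] := pselect (A k).
        apply: le_trans (rnorm_le_sub _ _ _ _ _).
        apply: le_trans Ak.2; apply: ltW; apply: le_lt_trans xpthr.
        by rewrite lee_fin.
      have [rk [xk [_ -> rrk lxk _]]] := good k w hk nAk (hE k hk nAk).
      rewrite lee_fin; apply: le_trans lxk; exact: ler_wpM2l.
    rewrite xpE in Yp.
    move: Y0 Yp Ylb; case: (rstar_sub f x0 khat (span_of (fun i => v i w))) => [y| |] //= y0 yp ylb.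
    rewrite rsE inver gt_eqF // -EFinM !lee_fin ler_pdivlMr // ler_pdivrMr //.
    rewrite !lee_fin in yp ylb; rewrite ylb /=; exact: le_trans yp xu.
  have PUc : P (~` U) = (1 - P U)%E by exact: probability_setC.
  have le1 := le_measure P (mem_set (measurableC mU)) (mem_set mE) sub.
  have le2 : ((1 - P U)%E <= P [set w | (l%:E <= rstar_sub f x0 khat (span_of (fun i => v i w))
                        / rstar f x0 khat <= u%:E)%E])%E.
    by rewrite -PUc; exact: le1.
  apply: (@le_trans _ _ (1 - P U)%E); last exact: le2.
  have PU0 := measure_ge0 P U.
  have PUfin : P U = (fine (P U))%:E.
    by rewrite fineK // ge0_fin_numE // (le_lt_trans PU) ?ltry.
  move: PU0 PU; rewrite PUfin; move: (fine (P U)) => q q0 qb.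
  rewrite -EFinB lee_fin; rewrite !lee_fin in q0 qb.
  rewrite -mulr_natl in qb; lra.
have r00 : r = 0 by apply/le_anti; rewrite rle0 r0.
have thr0 : thr = 0%E by rewrite /thr rsE r00 mule0.
rewrite thr0 in hp.
have hT : [set w | (0 <= rnorm_sub f x0 khat p (span_of (fun i => v i w)))%E] = setT.
  by apply/seteqP; split => // w _; exact: rnorm_sub_ge0.
rewrite hT probability_setT lee_fin in hp.
apply: le_trans (measure_ge0 P _); rewrite lee_fin; lra.
Qed.
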